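(* A finite-dimensional topological manifold, or a finite-dimensional CW complex, has the homotopy fixed point property only if it is a singleton.
   Context: A topological space $X$ has the homotopy fixed point property if for every continuous map $f\colon I\times X\to X$, where $I=[0,1]$, there exists a continuous map $p\colon I\to X$ with $f(t,p(t))=p(t)$ for all $t\in I$. *)

(* Defs.v *)
From HB Require Import structures.
From mathcomp Require Import all_boot all_order all_algebra.
From mathcomp Require Import all_classical all_reals all_analysis.
From mathcomp Require Import Rstruct Rstruct_topology.
From Stdlib Require Import Rdefinitions.
Set Implicit Arguments. Unset Strict Implicit. Unset Printing Implicit Defensive.
Import Order.TTheory GRing.Theory Num.Theory.
Local Open Scope classical_set_scope.
Local Open Scope ring_scope.

Definition unit_interval : set R := [set t : R | (0 <= t <= 1)%R].

Definition homotopy_fixed_point_property (X : topologicalType) : Prop :=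
  forall f : R * X -> X,
    {within unit_interval `*` [set: X], continuous f} ->
    exists p : R -> X,
      {within unit_interval, continuous p} /\
      (forall t, unit_interval t -> f (t, p t) = p t).

(* Euclidean space R^n = 'rV[R]_n (product topology) and squared Euclidean norm *)
Definition sqnorm (n : nat) (v : 'rV[R]_n) : R := \sum_(i < n) (v ord0 i) ^+ 2.
Definition closed_disk (n : nat) : set 'rV[R]_n := [set v | sqnorm v <= 1].
Definition open_disk (n : nat) : set 'rV[R]_n := [set v | sqnorm v < 1].
Definition sphere (n : nat) : set 'rV[R]_n := [set v | sqnorm v = 1].
Arguments closed_disk n : clear implicits.
Arguments open_disk n : clear implicits.
Arguments sphere n : clear implicits.

Definition homeomorphic_sets (X Y : topologicalType) (A : set X) (B : set Y)
  : Prop :=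
  exists (f : X -> Y) (g : Y -> X),
    [/\ f @` A `<=` B, g @` B `<=` A,
        (forall x, A x -> g (f x) = x) /\ (forall y, B y -> f (g y) = y),
        ({within A, continuous f}) & ({within B, continuous g})].

Definition topological_manifold (n : nat) (X : topologicalType) : Prop :=
  [/\ hausdorff_space X, @second_countable X &
      forall x : X, exists (U : set X) (V : set 'rV[R]_n),
        [/\ open U, U x, open V & homeomorphic_sets U V]].

Definition finite_dim_manifold (X : topologicalType) : Prop :=
  exists n, topological_manifold n X.

(* CW complex of dimension <= N (Hatcher, Prop. A.2 / Whitehead's definition):
   a Hausdorff space X with cells indexed by a type C, each cell c of dimension
   dim c <= N having a characteristic map Phi c : D^(dim c) -> X such that
   - Phi c is continuous on the closed disk and restricts to a homeomorphism
     of the open disk onto the open cell e c := Phi c (open disk);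
   - the open cells partition X;
   - (closure finiteness) Phi c (boundary sphere) lies in the union of finitely
     many cells of dimension < dim c;
   - (weak topology) A is closed iff A meets each closed cell in a closed set. *)
Definition CW_complex (N : nat) (X : topologicalType) : Prop :=
  hausdorff_space X /\
  exists (C : Type) (dim : C -> nat) (Phi : forall c : C, 'rV[R]_(dim c) -> X),
    let e := fun c => Phi c @` open_disk (dim c) in
    [/\ (forall c, leq (dim c) N),
        (forall c, {within closed_disk (dim c), continuous Phi c}),
        (forall c, exists g : X -> 'rV[R]_(dim c),
           [/\ g @` e c `<=` open_disk (dim c),
               (forall v, open_disk (dim c) v -> g (Phi c v) = v),
               (forall x, e c x -> Phi c (g x) = x) &
               ({within e c, continuous g})]),
        (forall x : X, exists c, e c x /\ forall c', e c' x -> c' = c) /\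
        (forall c, exists F : set C,
           [/\ finite_set F, (forall c', F c' -> leq (dim c').+1 (dim c)) &
               Phi c @` sphere (dim c) `<=` \bigcup_(c' in F) e c']) &
        (forall A : set X, closed A <-> forall c, closed (A `&` closure (e c)))].

Definition finite_dim_CW_complex (X : topologicalType) : Prop :=
  exists N, CW_complex N X.

(* Main.v *)
Set Warnings "-all".
Require Import Defs.
From mathcomp Require Import all_boot all_order all_algebra.
From mathcomp Require Import all_classical all_reals all_analysis.
From mathcomp Require Import Rstruct Rstruct_topology.
From Stdlib Require Import Rdefinitions RIneq.
From mathcomp Require Import ring lra.
Import Order.TTheory GRing.Theory Num.Theory.
Import numFieldNormedType.Exports.

Local Open Scope classical_set_scope.
Local Open Scope ring_scope.
Delimit Scope ring_scope with R.
Bind Scope ring_scope with R.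

Definition cl (z : R) : R := ((`|z| - `|z - 1| + 1) / 2)%R.
Definition bb (y : R) : R := (36 * y ^+ 3 - 45 * y ^+ 2 + 15 * y)%R.

Lemma cl_cases z : ((z <= 0 /\ cl z = 0) \/ (0 <= z <= 1 /\ cl z = z) \/ (1 <= z /\ cl z = 1))%R.
Proof.
rewrite /cl; have [h|h] := leP 0%R z.
  rewrite (ger0_norm h); have [h2|h2] := leP 1%R z.
    rewrite (ger0_norm (x := (z - 1)%R)); last lra.
    right; right; split => //; lra.
  rewrite (ltr0_norm (x := (z - 1)%R)); last lra.
  right; left; split; lra.
rewrite (ltr0_norm h) (ltr0_norm (x := (z - 1)%R)); last lra.
left; split; lra.
Qed.

Lemma cl_cases' z w : (w = cl z -> (z <= 0 /\ w = 0) \/ (0 <= z <= 1 /\ w = z) \/ (1 <= z /\ w = 1))%R.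
Proof. by move=> ->; apply: cl_cases. Qed.

Lemma cl_range z : (0 <= cl z <= 1)%R.
Proof. case: (cl_cases z) => [[h ->]|[[h ->]|[h ->]]] => //; lra. Qed.

Lemma bbz : (bb 0 = 0)%R.
Proof. by rewrite /bb !expr0n /=; lra. Qed.
Lemma bbo : (bb 1 = 6)%R.
Proof. by rewrite /bb !expr1n; lra. Qed.

Lemma fix_eq (y t : R) : (0 <= t <= 1 -> y = cl (y + 6 * t - bb y) ->
  0 <= y <= 1 /\ bb y = 6 * t)%R.
Proof.
move=> /andP[t0 t1] E.
have /andP[y0 y1] : 0 <= y <= 1 by rewrite E cl_range.
split; first by rewrite y0 y1.
case: (cl_cases' _ _ E) => [[h e]|[[h e]|[h e]]].
- move: h; rewrite e /bb; lra.
- lra.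
- move: h; rewrite e /bb; lra.
Qed.

Lemma bb0 y : (0 <= y <= 1 -> bb y = 0 -> y = 0)%R.
Proof.
move=> /andP[h1 h2] h.
have hs : 0 <= (y - 5/8) ^+ 2 := sqr_ge0 _.
have q : 0 < 36 * y ^+ 2 - 45 * y + 15 by nra.
have : y * (36 * y ^+ 2 - 45 * y + 15) = 0 by rewrite -h /bb; ring.
move/eqP; rewrite mulf_eq0 => /orP[/eqP //|/eqP]; lra.
Qed.
Lemma bb1 y : (0 <= y <= 1 -> bb y = 6 -> y = 1)%R.
Proof.
move=> /andP[h1 h2] h.
have hs : 0 <= (y - 1/8) ^+ 2 := sqr_ge0 _.
have q : 0 < 36 * y ^+ 2 - 9 * y + 6 by nra.
have : (y - 1) * (36 * y ^+ 2 - 9 * y + 6) = 0 by rewrite (_ : 0 = bb y - 6); [rewrite /bb; ring | lra].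
move/eqP; rewrite mulf_eq0 => /orP[/eqP|/eqP]; lra.
Qed.

Lemma unit_itv : unit_interval = `[0%R, 1%R]%classic.
Proof.
apply/seteqP; split => x; rewrite /= in_itv /=.
  by move=> [/RleP h1 /RleP h2]; rewrite h1 h2.
by move=> /andP[h1 h2]; split; apply/RleP.
Qed.

Lemma no_section (q : R -> R) : {within unit_interval, continuous q} ->
  (forall t, unit_interval t -> q t = cl (q t + 6 * t - bb (q t))%R) -> False.
Proof.
rewrite unit_itv => qc qE.
have H t : (0 <= t <= 1 -> 0 <= q t <= 1 /\ bb (q t) = 6 * t)%R.
  move=> ht; apply: fix_eq => //; apply: qE; by rewrite /= in_itv.
have q0 : q 0%R = 0%R.
  have [h1 h2] := H 0 ltac:(lra); apply: bb0 => //; rewrite h2; lra.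
have q1 : q 1%R = 1%R.
  have [h1 h2] := H 1 ltac:(lra); apply: bb1 => //; rewrite h2; lra.
have [c c01 qc2] : exists2 c, c \in `[0%R, 1%R] & q c = (1/2)%R.
  apply: IVT; [lra | exact: qc | ].
  rewrite q0 q1 ge_min le_max; apply/andP; split; apply/orP; [left|right]; lra.
move: c01; rewrite in_itv /= => c01.
have [_ hc] := H c c01.
move: hc; rewrite qc2 /bb => hc.
have c8 : c = (1/8)%R by lra.
have [d d01 qd] : exists2 d, d \in `[0%R, c] & q d = (1/3)%R.
  apply: IVT; first lra.
    apply: continuous_subspaceW qc => x /=; rewrite !in_itv /= => /andP[h1 h2].
    by apply/andP; split; lra.
  rewrite q0 qc2 ge_min le_max; apply/andP; split; apply/orP; [left|right]; lra.
move: d01; rewrite in_itv /= => d01.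
have [_ hd] := H d ltac:(lra).
move: hd; rewrite qd /bb => hd.
lra.
Qed.

Lemma fst_cont (A B : topologicalType) : continuous (@fst A B).
Proof. by move=> x; apply: cvg_fst. Qed.
Lemma snd_cont (A B : topologicalType) : continuous (@snd A B).
Proof. by move=> x; apply: cvg_snd. Qed.

Lemma contM (T : topologicalType) (f g : T -> R) : continuous f -> continuous g ->
  continuous (fun x => f x * g x).
Proof. by move=> hf hg x; exact: (@continuousM _ _ f g x (hf x) (hg x)). Qed.
Lemma contD (T : topologicalType) (f g : T -> R) : continuous f -> continuous g ->
  continuous (fun x => f x + g x).
Proof. by move=> hf hg x; exact: (@continuousD _ R^o _ f g x (hf x) (hg x)). Qed.
Lemma contB (T : topologicalType) (f g : T -> R) : continuous f -> continuous g ->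
  continuous (fun x => f x - g x).
Proof. by move=> hf hg x; exact: (@continuousB _ R^o _ f g x (hf x) (hg x)). Qed.
Lemma contC (T : topologicalType) (c : R) : continuous (fun _ : T => c).
Proof. exact: cst_continuous. Qed.
Lemma contI : continuous (fun x : R => x).
Proof. by move=> x. Qed.

Lemma bb_cont : continuous bb.
Proof.
have -> : bb = (fun y => y * (y * (36 * y - 45) + 15)).
  by apply: funext => y; rewrite /bb; ring.
apply: contM; first exact: contI.
apply: contD; last exact: contC.
apply: contM; first exact: contI.
apply: contB; last exact: contC.
apply: contM; first exact: contC.
exact: contI.
Qed.

Lemma unit0 : unit_interval 0.
Proof. by split; [apply: RIneq.Rle_refl | apply: RIneq.Rle_0_1]. Qed.

Lemma transfer (X : topologicalType) (r : X -> R) (s : R -> X) :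
  continuous r -> continuous s -> (forall u, r (s u) = cl u) ->
  ~ homotopy_fixed_point_property X.
Proof.
move=> rc sc rs H.
pose h := fun tx : R * X => r tx.2 + 6 * tx.1 - bb (r tx.2).
have r2 : continuous (fun tx : R * X => r tx.2).
  by move=> x; exact: (continuous_comp (@snd_cont R X x) (rc _)).
have hc : continuous h.
  apply: contB; first apply: contD => //.
    by apply: contM; [exact: contC | exact: fst_cont].
  by move=> x; exact: (continuous_comp (r2 x) (bb_cont _)).
pose f := fun tx => s (h tx).
have fc : continuous f := fun x => continuous_comp (hc x) (sc _).
have [p [pc pfix]] := H f (continuous_subspaceT fc).
apply: (@no_section (r \o p)).
  by apply: within_continuous_comp => // y _; exact: rc.
by move=> t ht; rewrite /= -{1}(pfix t ht) rs.
Qed.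

Lemma discrete_no (X : topologicalType) (a b : X) : a <> b ->
  open [set a] -> closed [set a] -> ~ homotopy_fixed_point_property X.
Proof.
move=> ab oa ca H.
pose f := fun tx : R * X => if pselect (tx.2 = a) then b else a.
have fc : continuous f.
  move=> [t x]; apply: (near_cst_continuous (f (t, x))).
  case: (pselect (x = a)) => [xa|xa].
    have N : nbhs (t, x) (snd @^-1` [set a]).
      by apply: snd_cont; apply: open_nbhs_nbhs; split => //.
    apply: filterS N => -[t' x'] /= e; rewrite /f /=.
    by case: (pselect (x' = a)) => h1; case: (pselect (x = a)) => h2 //; exfalso; auto.
  have N : nbhs (t, x) (snd @^-1` (~` [set a])).
    by apply: snd_cont; apply: open_nbhs_nbhs; split => //; exact: closed_openC.
  apply: filterS N => -[t' x'] /= e; rewrite /f /=.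
  by case: (pselect (x' = a)) => h1; case: (pselect (x = a)) => h2 //; exfalso; auto.
have [p [pc pfix]] := H f (continuous_subspaceT fc).
have := pfix 0 unit0; rewrite /f /=.
case: pselect => [e|ne] /= E; first by apply: ab; rewrite -e.
by apply: ne.
Qed.

Set Implicit Arguments. Unset Strict Implicit.

Lemma normE (n : nat) (v : 'rV[R]_n) : `|v| = \big[Num.max/0]_ij `|v ij.1 ij.2|.
Proof. by rewrite -mx_normrE. Qed.
Lemma entry_le (n : nat) (v : 'rV[R]_n) i : `|v ord0 i| <= `|v|.
Proof. rewrite normE (bigD1 (ord0, i)) //=. by rewrite le_max lexx. Qed.
Lemma mxnorm_le (n : nat) (v : 'rV[R]_n) c : 0 <= c -> (forall i, `|v ord0 i| <= c) -> `|v| <= c.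
Proof.
move=> c0 H; rewrite normE; elim/big_ind: _ => // [x y hx hy|[i j] _].
  by rewrite ge_max hx hy.
by rewrite (ord1 i); exact: H.
Qed.

Lemma compact_cball n (v0 : 'rV[R]_n) del : 0 < del -> compact (closed_ball v0 del).
Proof.
move=> d0; apply: bounded_closed_compact; last exact: closed_ball_closed.
exists (`|v0| + del); split; first exact: num_real.
move=> M HM x; rewrite closed_ballE //= => hx.
have := ler_normB v0 (v0 - x); rewrite subKr => h1.
apply: ltW; apply: le_lt_trans HM; apply: le_trans h1 _.
by rewrite lerD2l.
Qed.

Lemma nc : continuous (fun x : R => `|x|).
Proof. exact: (@norm_continuous R R^o). Qed.

Lemma cl_cont : continuous cl.
Proof.
rewrite /cl; apply: contM; last exact: contC.
apply: contD; last exact: contC.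
apply: contB; first exact: nc.
move=> x; apply: (continuous_comp (f := fun z : R => z - 1)).
  by apply: contB; [exact: contI | exact: contC].
exact: nc.
Qed.

Definition beta (h d : R) := cl (2 - d / h).
Definition rho n (v0 : 'rV[R]_n.+1) h (v : 'rV[R]_n.+1) :=
  (v ord0 ord0 - v0 ord0 ord0) / h * beta h `|v - v0|.
Definition e0 n : 'rV[R]_n.+1 := \row_j (if j == ord0 then 1 else 0).
Definition arc n (v0 : 'rV[R]_n.+1) h (u : R) : 'rV[R]_n.+1 := v0 + (u * h) *: e0 n.

Lemma beta_one h d : 0 < h -> d <= h -> beta h d = 1.
Proof.
move=> h0 dh; have : d / h <= 1 by rewrite ler_pdivrMr // mul1r.
move=> H; rewrite /beta; case: (cl_cases (2 - d / h)) => [[a b]|[[a b]|[a b]]] //; lra.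
Qed.

Lemma beta_zero h d : 0 < h -> 2 * h <= d -> beta h d = 0.
Proof.
move=> h0 dh; have : 2 <= d / h by rewrite ler_pdivlMr.
move=> H; rewrite /beta; case: (cl_cases (2 - d / h)) => [[a b]|[[a b]|[a b]]] //; lra.
Qed.

Lemma e0_norm n : `|e0 n| <= 1.
Proof.
apply: mxnorm_le => // i; rewrite /e0 mxE.
by case: (i == ord0); rewrite ?normr1 ?normr0.
Qed.

Lemma arc_norm n (v0 : 'rV[R]_n.+1) h u : 0 < h -> 0 <= u <= 1 -> `|arc v0 h u - v0| <= h.
Proof.
move=> h0 /andP[u0 u1]; rewrite /arc addrC addKr normrZ.
have := e0_norm n => en.
rewrite ger0_norm; last by apply: mulr_ge0 => //; exact: ltW.
have : u * h <= h by nra.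
move=> uh; apply: le_trans _ uh.
have uh0 : 0 <= u * h by nra.
nra.
Qed.

Lemma rho_arc n (v0 : 'rV[R]_n.+1) h u : 0 < h -> 0 <= u <= 1 -> rho v0 h (arc v0 h u) = u.
Proof.
move=> h0 hu; rewrite /rho beta_one //; last exact: arc_norm.
rewrite /arc !mxE eqxx.
by field; rewrite gt_eqF.
Qed.

Lemma rho_zero n (v0 : 'rV[R]_n.+1) h v : 0 < h -> 2 * h <= `|v - v0| -> rho v0 h v = 0.
Proof. by move=> h0 hv; rewrite /rho beta_zero // mulr0. Qed.

Lemma rho_cont n (v0 : 'rV[R]_n.+1) h : continuous (rho v0 h).
Proof.
rewrite /rho; apply: contM.
  apply: contM; last exact: contC.
  apply: contB; last exact: contC.
  exact: coord_continuous.
move=> v.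
have c1 : {for v, continuous (fun v : 'rV[R]_n.+1 => `|v - v0|)}.
  have c0 : {for v, continuous (fun v : 'rV[R]_n.+1 => v - v0)}.
    by apply: continuousB => //; exact: cst_continuous.
  exact: (continuous_comp c0 (@norm_continuous _ _ _)).
have c2 : continuous (beta h).
  move=> d; rewrite /beta.
  have c3 : {for d, continuous (fun d : R => 2 - d / h)}.
    by apply: contB; [exact: contC | apply: contM; [exact: contI | exact: contC]].
  exact: (continuous_comp c3 (@cl_cont (2 - d / h))).
exact: (continuous_comp c1 (@c2 `|v - v0|)).
Qed.

Lemma comp_within (T U W : topologicalType) (A : set U) (g : T -> U) (h : U -> W) x :
  {within A, continuous h} -> {for x, continuous g} -> (forall z, A (g z)) ->
  {for x, continuous (h \o g)}.
Proof.
move=> hc gc gA.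
have H1 : g @ x --> (g x : subspace A).
  apply/(subspace_cvgP _ (gA x)).
  move=> P hP; have := gc _ hP.
  by apply: (@filterS _ (nbhs x)) => z /= /(_ (gA z)).
exact: (cvg_comp _ _ H1 (hc (g x))).
Qed.

Lemma chart_no (X : topologicalType) (m : nat) (U : set X) (V : set 'rV[R]_m.+1)
  (psi : X -> 'rV[R]_m.+1) (phi : 'rV[R]_m.+1 -> X) (v0 : 'rV[R]_m.+1) (del : R) :
  hausdorff_space X -> open U -> 0 < del -> closed_ball v0 del `<=` V ->
  (forall x, U x -> V (psi x)) -> (forall v, V v -> U (phi v)) ->
  (forall x, U x -> phi (psi x) = x) -> (forall v, V v -> psi (phi v) = v) ->
  {within U, continuous psi} -> {within V, continuous phi} ->
  ~ homotopy_fixed_point_property X.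
Proof.
move=> hX oU d0 KV psiV phiU phipsi psiphi psic phic.
pose h := del / 2.
have h0 : 0 < h by rewrite divr_gt0.
have h2 : 2 * h = del by rewrite /h; field.
pose a := fun u => arc v0 h (cl u).
have aK u : closed_ball v0 del (a u).
  rewrite closed_ballE // /closed_ball_ /= distrC.
  apply: le_trans (arc_norm v0 h0 (cl_range u)) _; lra.
have ac u : {for u, continuous a}.
  rewrite /a /arc; apply: continuousD; first exact: cst_continuous.
  apply: continuousZr_tmp; apply: contM; [exact: cl_cont | exact: contC].
pose s := fun u => phi (a u).
pose r := fun x => if pselect (U x) then rho v0 h (psi x) else 0.
apply: (@transfer X r s).
- move=> x; case: (pselect (U x)) => Ux.
    rewrite (continuous_open_subspace _ oU) in psic.
    have pc : {for x, continuous psi} by apply: psic; rewrite inE.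
    have c2 : {for x, continuous (rho v0 h \o psi)}.
      exact: (continuous_comp pc (@rho_cont _ v0 h (psi x))).
    have E : {near x, (rho v0 h \o psi) =1 r}.
      have N : nbhs x U by apply: open_nbhs_nbhs; split.
      apply: filterS N => y Uy; rewrite /r /=; case: pselect => //.
    have rx : r x = rho v0 h (psi x) by rewrite /r; case: pselect.
    rewrite /continuous_at rx.
    exact: (cvg_trans (near_eq_cvg E) c2).
  have Kc : compact (phi @` closed_ball v0 del).
    apply: continuous_compact; last exact: compact_cball.
    exact: continuous_subspaceW KV phic.
  have N : nbhs x (~` (phi @` closed_ball v0 del)).
    apply: open_nbhs_nbhs; split; first by apply: closed_openC; exact: compact_closed hX Kc.
    by move=> [v Kv e]; apply: Ux; rewrite -e; apply: phiU; apply: KV.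
  apply: (near_cst_continuous (0 : R)); apply: filterS N => y /= nK.
  rewrite /r; case: pselect => // Uy.
  apply: rho_zero => //; rewrite h2.
  have [//|lt] := leP del `|psi y - v0|.
  exfalso; apply: nK; exists (psi y); last exact: phipsi.
  by rewrite closed_ballE // /closed_ball_ /= distrC ltW.
- move=> u; apply: (comp_within (A := V) (g := a) (h := phi)) => //.
  by move=> z; apply: KV.
- move=> u; rewrite /r /s.
  case: (pselect (U (phi (a u)))) => [_|nU] /=; last by exfalso; apply: nU; apply: phiU; apply: KV.
  rewrite psiphi; last exact: KV.
  exact: rho_arc h0 (cl_range u).
Qed.

Lemma chart_no' (X : topologicalType) (n : nat) (U : set X) (V : set 'rV[R]_n)
  (psi : X -> 'rV[R]_n) (phi : 'rV[R]_n -> X) (v0 : 'rV[R]_n) (del : R) :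
  leq 1 n -> hausdorff_space X -> open U -> 0 < del -> closed_ball v0 del `<=` V ->
  (forall x, U x -> V (psi x)) -> (forall v, V v -> U (phi v)) ->
  (forall x, U x -> phi (psi x) = x) -> (forall v, V v -> psi (phi v) = v) ->
  {within U, continuous psi} -> {within V, continuous phi} ->
  ~ homotopy_fixed_point_property X.
Proof. case: n U V psi phi v0 => // m U V psi phi v0 _; exact: chart_no. Qed.

Lemma sqnorm_cont n : continuous (@sqnorm n).
Proof.
have H (s : seq 'I_n) : continuous (fun v : 'rV[R]_n => \sum_(i <- s) (v ord0 i) ^+ 2).
  elim: s => [|i s IH].
    have -> : (fun v : 'rV[R]_n => \sum_(i <- [::]) (v ord0 i) ^+ 2) = (fun _ => 0).
      by apply: funext => v; rewrite big_nil.
    exact: contC.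
  have -> : (fun v : 'rV[R]_n => \sum_(j <- i :: s) (v ord0 j) ^+ 2) =
    (fun v => (v ord0 i) * (v ord0 i) + \sum_(j <- s) (v ord0 j) ^+ 2).
    by apply: funext => v; rewrite big_cons expr2.
  apply: contD => //; apply: contM; exact: coord_continuous.
exact: H.
Qed.

Lemma closed_disk_closed n : closed (closed_disk n).
Proof.
have -> : closed_disk n = (@sqnorm n) @^-1` [set x | x <= 1].
  by apply/seteqP; split => v.
by move/continuous_closedP : (@sqnorm_cont n); apply; exact: closed_le.
Qed.

Lemma sphere_closed n : closed (sphere n).
Proof.
have -> : sphere n = (@sqnorm n) @^-1` ([set x | x <= 1] `&` [set x | 1 <= x]).
  apply/seteqP; split => v /=; first by move=> ->; rewrite lexx.
  by move=> [h1 h2]; apply/eqP; rewrite eq_le h1 h2.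
move/continuous_closedP : (@sqnorm_cont n); apply.
by apply: closedI; [exact: closed_le | exact: closed_ge].
Qed.

Lemma sqnorm_entry n (v : 'rV[R]_n) i : (v ord0 i) ^+ 2 <= sqnorm v.
Proof.
rewrite /sqnorm (bigD1 i) //= lerDl.
by apply: sumr_ge0 => j _; exact: sqr_ge0.
Qed.

Lemma closed_disk_compact n : compact (closed_disk n).
Proof.
apply: (subclosed_compact (B := closed_ball (0 : 'rV[R]_n) 1)).
- exact: closed_disk_closed.
- exact: compact_cball.
move=> v /= hv; rewrite closed_ballE // /closed_ball_ /= sub0r normrN.
apply: mxnorm_le => // i.
have := sqnorm_entry v i => h.
have h1 : (v ord0 i) ^+ 2 <= 1 by apply: le_trans h hv.
rewrite -(real_normK (num_real (v ord0 i))) in h1.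
have := normr_ge0 (v ord0 i).
nra.
Qed.

Lemma sphere_sub n : sphere n `<=` closed_disk n.
Proof. by move=> v; rewrite /sphere /closed_disk /= => ->. Qed.

Lemma open_sub n : open_disk n `<=` closed_disk n.
Proof. by move=> v; rewrite /open_disk /closed_disk /=; apply: ltW. Qed.

Lemma cw_open (X : topologicalType) (C : Type) (dim : C -> nat)
  (Phi : forall c, 'rV[R]_(dim c) -> X) (c : C) :
  hausdorff_space X ->
  (forall c, {within closed_disk (dim c), continuous Phi c}) ->
  (forall x c1 c2, (Phi c1 @` open_disk (dim c1)) x -> (Phi c2 @` open_disk (dim c2)) x -> c1 = c2) ->
  (forall c, exists F : set C,
     [/\ finite_set F, (forall c', F c' -> leq (dim c').+1 (dim c)) &
         Phi c @` sphere (dim c) `<=` \bigcup_(c' in F) (Phi c' @` open_disk (dim c'))]) ->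
  (forall A : set X, closed A <-> forall c, closed (A `&` closure (Phi c @` open_disk (dim c)))) ->
  (forall c', leq (dim c') (dim c)) ->
  open (Phi c @` open_disk (dim c)).
Proof.
move=> hX Phic uniq bd weak cmax.
set e := fun c => Phi c @` open_disk (dim c).
rewrite -[X in open X]setCK; apply: closed_openC.
apply/weak => c'.
have Dc : closed (Phi c' @` closed_disk (dim c')).
  apply: compact_closed => //; apply: continuous_compact; first exact: Phic.
  exact: closed_disk_compact.
have cl_sub : closure (e c') `<=` Phi c' @` closed_disk (dim c').
  move=> x hx.
  have sub : e c' `<=` Phi c' @` closed_disk (dim c').
    by move=> y [v vD <-]; exists v => //; apply: ltW.
  by have := closureS sub hx; rewrite -((closure_id _).1 Dc).
have bnd c1 x : leq (dim c1) (dim c) -> (Phi c1 @` sphere (dim c1)) x -> ~ e c x.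
  move=> le hx ex; have [F [_ Fd Fs]] := bd c1.
  have [c2 Fc2 e2] := Fs x hx.
  have eq := uniq x c2 c e2 ex.
  by move: (Fd _ Fc2); rewrite eq => /leq_trans/(_ le); rewrite ltnn.
case: (pselect (c' = c)) => [ec|ne]; first subst c'.
  have -> : ~` e c `&` closure (e c) = closure (e c) `&` (Phi c @` sphere (dim c)).
    apply/seteqP; split => x /=.
      move=> [nex clx]; split => //.
      have [v vD ev] := cl_sub x clx; exists v => //.
      move: vD; rewrite /closed_disk /= le_eqVlt => /orP[/eqP //|lt].
      by exfalso; apply: nex; exists v.
    by move=> [clx sx]; split => //; exact: (bnd c x (leqnn _) sx).
  apply: closedI; first exact: closed_closure.
  apply: (compact_closed hX); apply: continuous_compact.
    exact: continuous_subspaceW (@sphere_sub _) (Phic c).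
  exact: (subclosed_compact (@sphere_closed (dim c)) (@closed_disk_compact (dim c)) (@sphere_sub (dim c))).
have -> : ~` e c `&` closure (e c') = closure (e c').
  apply/seteqP; split => x /=; first by case.
  move=> clx; split => // ex.
  have [v vD ev] := cl_sub x clx.
  move: vD; rewrite /closed_disk /= le_eqVlt => /orP[/eqP s1|lt].
    by apply: (bnd c' x (cmax c')) => //; exists v.
  by apply: ne; apply: (uniq x c' c) => //; exists v.
exact: closed_closure.
Qed.

Lemma exists_maxdim (C : Type) (dim : C -> nat) N (c0 : C) :
  (forall c, leq (dim c) N) -> exists c, forall c', leq (dim c') (dim c).
Proof.
move=> hN; case: (pselect (exists c, forall c', leq (dim c') (dim c))) => // H.
have H' c : exists c', leq (dim c).+1 (dim c').
  case: (pselect (exists c', leq (dim c).+1 (dim c'))) => // nH.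
  exfalso; apply: H; exists c => c'; rewrite leqNgt; apply/negP => lt.
  by apply: nH; exists c'.
have K k : exists c, leq k (dim c).
  elim: k => [|k [c hc]]; first by exists c0.
  by have [c' lt] := H' c; exists c'; exact: leq_ltn_trans hc lt.
have [c hc] := K N.+1.
by move: (leq_trans hc (hN c)); rewrite ltnn.
Qed.

Lemma rV0_eq k (v w : 'rV[R]_k) : k = 0%N -> v = w.
Proof. by move=> k0; subst k; apply/rowP => -[]. Qed.

Lemma ball_in_disk n : closed_ball (0 : 'rV[R]_n) (1 / (n%:R + 1)) `<=` open_disk n.
Proof.
have k0 : 0 <= (n%:R : R) by [].
have d0 : 0 < 1 / (n%:R + 1 : R) by rewrite divr_gt0 //; lra.
move=> v; rewrite closed_ballE // /closed_ball_ /= sub0r normrN => hv.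
set d := 1 / (n%:R + 1 : R) in d0 hv *.
have hd : d * (n%:R + 1) = 1 by rewrite /d; field; lra.
have hi i : (v ord0 i) ^+ 2 <= d ^+ 2.
  rewrite -(real_normK (num_real (v ord0 i))).
  have := entry_le v i => h; have := normr_ge0 (v ord0 i); nra.
rewrite /open_disk /= /sqnorm.
apply: le_lt_trans (ler_sum _ (fun i _ => hi i)) _.
rewrite sumr_const card_ord -mulr_natr.
nra.
Qed.

Theorem corollary4p8 (X : topologicalType) :
  (finite_dim_manifold X \/ finite_dim_CW_complex X) ->
  homotopy_fixed_point_property X ->
  exists x : X, forall y : X, y = x.
Proof.
move=> HX H.
have [p _] := H (@snd R X) (continuous_subspaceT (@snd_cont R X)).
set a := p 0.
case: (pselect (forall y, y = a)) => [all|na]; first by exists a.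
have [b nb] : exists b, b <> a by apply/existsNP.
exfalso.
have ba : a <> b by move=> e; apply: nb; rewrite e.
case: HX => [[n [hX _ loc]]|[N [hX [C [dim [Phi HC]]]]]].
- have [U [V [oU Ua oV [f [g [fU gV [gf fg] fc gc]]]]]] := loc a.
  have psiV x : U x -> V (f x) by move=> Ux; apply: fU; exists x.
  have phiU v : V v -> U (g v) by move=> Vv; apply: gV; exists v.
  case: n U V f g oU Ua oV fU gV gf fg fc gc psiV phiU loc
    => [|m] U V f g oU Ua oV fU gV gf fg fc gc psiV phiU loc.
    have Ua1 : U = [set a].
      apply/seteqP; split => [y Uy|y ->] //=.
      by rewrite -(gf y Uy) -(gf a Ua); congr g; apply/rowP => -[].
    apply: (@discrete_no X a b ba _ _ H); first by rewrite -Ua1.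
    by apply: accessible_closed_set1; apply: hausdorff_accessible.
  have : nbhs (f a) V by apply: open_nbhs_nbhs; split => //; exact: psiV.
  move=> /nbhs_ballP [e e0 eV].
  have e20 : 0 < e / 2 by rewrite divr_gt0.
  apply: (@chart_no X m U V f g (f a) (e / 2) hX oU e20 _ psiV phiU gf fg fc gc H).
  apply: subset_trans (closed_ball_subset e20 _) eV; lra.
- move: HC => /= [dimN Phic ginv [part bd] weak].
  have uniq x c1 c2 : (Phi c1 @` open_disk (dim c1)) x ->
      (Phi c2 @` open_disk (dim c2)) x -> c1 = c2.
    move=> h1 h2; have [c [_ u]] := part x.
    by rewrite (u c1 h1) (u c2 h2).
  have [ca [eca _]] := part a.
  have [cm cmax] := exists_maxdim ca dimN.
  case E : (dim cm) => [|m].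
    have cmax' c' : leq (dim c') (dim ca) by rewrite (leq_trans (cmax c')) // E.
    have da : dim ca = 0%N by apply/eqP; rewrite -leqn0 -E cmax.
    have Ea1 : Phi ca @` open_disk (dim ca) = [set a].
      apply/seteqP; split => [y [v _ <-]|y ->] //=.
      by case: eca => va _ <-; rewrite (rV0_eq v va da).
    apply: (@discrete_no X a b ba _ _ H).
      by rewrite -Ea1; exact: (cw_open hX Phic uniq bd weak cmax').
    by apply: accessible_closed_set1; apply: hausdorff_accessible.
  have [gi [gs gpi pgi gcont]] := ginv cm.
  have d0 : 0 < 1 / ((dim cm)%:R + 1 : R) by rewrite divr_gt0 //; lra.
  apply: (@chart_no' X (dim cm) (Phi cm @` open_disk (dim cm)) (open_disk (dim cm))
    gi (Phi cm) 0 _ _ hX (cw_open hX Phic uniq bd weak cmax) d0 (@ball_in_disk _)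
    _ _ pgi gpi gcont _ H).
  + by rewrite E.
  + by move=> x ex; apply: gs; exists x.
  + by move=> v ov; exists v.
  + exact: continuous_subspaceW (@open_sub _) (Phic cm).
Qed.
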